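(* Let $E\subseteq\{1,\dots,n\}^2$ and let $Y_1,\dots,Y_k\in\mathbb{S}^n_{++}$ satisfy $(Y_j)_{ab}=0$ for all $(a,b)\notin E$ and all $1\le j\le k$. Then $M(Y_1,\dots,Y_k)_{ab}=0$ for all $(a,b)\notin E$.
   Context: $\mathbb{S}^n_{++}$ denotes the set of real symmetric positive definite $n\times n$ matrices. For $0<\alpha\le\beta$ and $t\in\mathbb{R}$ set $\varphi_{\alpha\beta}(t)=\frac{\beta^t-\alpha^t}{\beta-\alpha}$ and $\psi_{\alpha\beta}(t)=\frac{\beta\alpha^t-\alpha\beta^t}{\beta-\alpha}$ if $\beta>\alpha$, and $\varphi_{\alpha\beta}(t)=t\alpha^{t-1}$, $\psi_{\alpha\beta}(t)=(1-t)\alpha^t$ if $\beta=\alpha$. For $1\le j\le k$ and $X\in\mathbb{S}^n_{++}$, with $\alpha=\lambda_{\min}(Y_jX^{-1})$, $\beta=\lambda_{\max}(Y_jX^{-1})$: $m^j_X=\frac{\log\beta-\log\alpha}{\beta-\alpha}$, $o^j_X=\frac{\beta\log\alpha-\alpha\log\beta}{\beta-\alpha}$ if $\beta>\alpha$, and $m^j_X=1/\alpha$, $o^j_X=\log\alpha-1$ if $\beta=\alpha$. The inductive Thompson mean $M(Y_1,\dots,Y_k)$ is the unique $X\in\mathbb{S}^n_{++}$ solving $\sum_{j=1}^k m^j_XY_j+\big(\sum_{j=1}^k o^j_X\big)X=0$; equivalently, it is the limit, for any $X_1\in\mathbb{S}^n_{++}$, of the sequence $X_{i+1}=\varphi_{\alpha\beta}(\tfrac{1}{i+1})Y_{j(i)}+\psi_{\alpha\beta}(\tfrac{1}{i+1})X_i$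 with $\alpha=\lambda_{\min}(Y_{j(i)}X_i^{-1})$, $\beta=\lambda_{\max}(Y_{j(i)}X_i^{-1})$, where $j(i)\in\{1,\dots,k\}$ satisfies $j(i)\equiv i\pmod k$. *)

(* Defs.v *)
From HB Require Import structures.
From mathcomp Require Import all_boot all_order all_algebra.
From mathcomp Require Import classical_sets boolp reals exp.
Set Implicit Arguments. Unset Strict Implicit. Unset Printing Implicit Defensive.
Import Order.TTheory GRing.Theory Num.Theory.
Local Open Scope ring_scope.
Local Open Scope classical_set_scope.

Section ThompsonMean.
Variable R : realType.

Definition posdef (n : nat) (A : 'M[R]_n) : Prop :=
  A^T = A /\ forall v : 'rV[R]_n, v != 0 -> 0 < (v *m A *m v^T) 0 0.

Definition lambda_min (n : nat) (A : 'M[R]_n) : R :=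
  inf [set a : R | eigenvalue A a].
Definition lambda_max (n : nat) (A : 'M[R]_n) : R :=
  sup [set a : R | eigenvalue A a].

Definition mcoef (n : nat) (Yj X : 'M[R]_n) : R :=
  let a := lambda_min (Yj *m invmx X) in
  let b := lambda_max (Yj *m invmx X) in
  if a < b then (ln b - ln a) / (b - a) else a^-1.
Definition ocoef (n : nat) (Yj X : 'M[R]_n) : R :=
  let a := lambda_min (Yj *m invmx X) in
  let b := lambda_max (Yj *m invmx X) in
  if a < b then (b * ln a - a * ln b) / (b - a) else ln a - 1.

Definition thompson_eq (n k : nat) (Y : 'I_k -> 'M[R]_n) (X : 'M[R]_n) : Prop :=
  \sum_(j < k) mcoef (Y j) X *: Y j + (\sum_(j < k) ocoef (Y j) X) *: X = 0.

Definition thompson_mean (n k : nat) (Y : 'I_k -> 'M[R]_n) : 'M[R]_n :=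
  xget 1%:M [set X : 'M[R]_n | posdef X /\ thompson_eq Y X].

End ThompsonMean.

(* Main.v *)
Require Import Defs.
From HB Require Import structures.
From mathcomp Require Import all_boot all_order all_algebra.
From mathcomp Require Import classical_sets boolp reals exp.
Set Implicit Arguments. Unset Strict Implicit.
Import Order.TTheory GRing.Theory Num.Theory.
Local Open Scope ring_scope.
Local Open Scope classical_set_scope.

Lemma roots_in_seq (R : idomainType) (p : {poly R}) : p != 0 ->
  exists s : seq R, forall x, root p x -> x \in s.
Proof.
move: {2}(size p) (leqnn (size p)) => N; elim: N p => [|N IH] p Hs p0.
  by move: p0; rewrite -size_poly_eq0; move: Hs; rewrite leqn0 => ->.
have [[x rx]|nr] := pselect (exists x, root p x); last first.
  by exists [::] => x rx; exfalso; apply: nr; exists x.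
have /factor_theorem [q pq] := rx.
have q0 : q != 0 by apply: contraNneq p0 => q0; rewrite pq q0 mul0r.
have szq : (size q <= N)%N.
  move: Hs; rewrite pq size_mul ?polyXsubC_eq0 // size_XsubC addn2 /=.
  by [].
have [s Hsq] := IH q szq q0.
exists (x :: s) => y; rewrite pq rootM root_XsubC in_cons => /orP[/Hsq->|->];
  by rewrite ?orbT.
Qed.

Lemma min_max_in_seq (R : realDomainType) (s : seq R) (S : set R) :
  S `<=` [set x | x \in s] -> S !=set0 ->
  (exists2 x, S x & forall y, S y -> x <= y) /\
  (exists2 x, S x & forall y, S y -> y <= x).
Proof.
elim: s S => [|z s IH] S sub [w Sw]; first by have := sub w Sw; rewrite /= in_nil.
have [S'0|S'n] := pselect ((S `&` [set x | x != z]) !=set0); last first.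
  have Sz : forall y, S y -> y = z.
    move=> y Sy; apply/eqP; apply: contrapT => nz; apply: S'n; exists y; split => //=; exact/negP.
  have Szz : S z by rewrite -(Sz w Sw).
  by split; exists z => // y /Sz ->.
have sub' : S `&` [set x | x != z] `<=` [set x | x \in s].
  move=> y [Sy /= nz]; move: (sub y Sy); by rewrite /= in_cons (negPf nz).
have [[m [Sm _] Hm] [M [SM _] HM]] := IH _ sub' S'0.
have [Sz|nSz] := pselect (S z).
  split.
    exists (Num.min m z); first by rewrite /Num.min; case: ifP.
    move=> y Sy; rewrite ge_min; have [->|nz] := eqVneq y z; first by rewrite lexx orbT.
    by rewrite Hm.
  exists (Num.max M z); first by rewrite /Num.max; case: ifP.
  move=> y Sy; rewrite le_max; have [->|nz] := eqVneq y z; first by rewrite lexx orbT.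
  by rewrite HM.
split; [exists m => // y Sy; apply: Hm | exists M => // y Sy; apply: HM];
  (split => //=; apply/eqP => yz; apply: nSz; by rewrite -yz).
Qed.
Lemma posdef_diag (R : realType) n (A : 'M[R]_n) (a : 'I_n) : posdef A -> 0 < A a a.
Proof.
move=> [_ H]; have := H (delta_mx (0:'I_1) a).
have -> : ((delta_mx (0:'I_1) a : 'rV_n) *m A *m (delta_mx (0:'I_1) a)^T) 0 0 = A a a.
  by rewrite -(rowE a A) trmx_delta -colE !mxE.
apply; apply/eqP => /matrixP /(_ 0 a); rewrite !mxE !eqxx /=; exact/eqP/oner_neq0.
Qed.

Lemma posdef_unit (R : realType) n (A : 'M[R]_n) : posdef A -> A \in unitmx.
Proof.
move=> [_ H]; rewrite unitmxE unitfE; apply/det0P => -[v v0 vA].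
by have := H v v0; rewrite vA mul0mx mxE ltxx.
Qed.

Lemma eig_pos (R : realType) n (Y X : 'M[R]_n) l : posdef Y -> posdef X ->
  eigenvalue (Y *m invmx X) l -> 0 < l.
Proof.
move=> PY PX /eigenvalueP [v Hv v0].
have XU := posdef_unit PX.
have e : v *m Y = l *: (v *m X).
  by rewrite -[v *m Y](mulmxKV XU) -[v *m Y *m invmx X]mulmxA Hv scalemxAl.
have := PY.2 v v0; rewrite e -scalemxAl mxE => h.
by rewrite -(pmulr_lgt0 _ (PX.2 v v0)).
Qed.

Lemma coef_cases (R : realType) n (Y X : 'M[R]_n) : posdef Y -> posdef X ->
  0 < mcoef Y X \/ (mcoef Y X = 0 /\ ocoef Y X = -1).
Proof.
move=> PY PX; rewrite /mcoef /ocoef /lambda_min /lambda_max.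
set S := [set a : R | eigenvalue (Y *m invmx X) a].
have [Sn|S0] := pselect (S !=set0); last first.
  have -> : S = set0 by apply/seteqP; split=> x // Sx; apply: S0; exists x.
  by right; rewrite inf0 sup0 ltxx invr0 ln0 // sub0r.
have [s Hs] := roots_in_seq (monic_neq0 (char_poly_monic (Y *m invmx X))).
have sub : S `<=` [set x | x \in s].
  by move=> x Sx; apply: Hs; rewrite -eigenvalue_root_char.
have [[m Sm Hm] [M SM HM]] := min_max_in_seq sub Sn.
have -> : inf S = m.
  apply/eqP; rewrite eq_le; rewrite (ge_inf _ Sm) ?lb_le_inf //.
  by exists m => y /Hm.
have -> : sup S = M.
  apply/eqP; rewrite eq_le; rewrite (ub_le_sup _ SM) ?ge_sup ?andbT //.
  by exists M => y /HM.
have m0 : 0 < m := eig_pos PY PX Sm.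
have M0 : 0 < M := eig_pos PY PX SM.
left; case: ifPn => mM; last by rewrite invr_gt0.
by rewrite divr_gt0 // subr_gt0 // ltr_ln.
Qed.

Local Close Scope classical_set_scope.
Unset Implicit Arguments. Set Strict Implicit.
Theorem corollary4p14 (R : realType) (n k : nat) (E : {set 'I_n * 'I_n})
  (Y : 'I_k -> 'M[R]_n) :
  (0 < k)%N ->
  (forall j, posdef (Y j)) ->
  (forall j (a b : 'I_n), (a, b) \notin E -> Y j a b = 0) ->
  forall a b : 'I_n, (a, b) \notin E -> thompson_mean Y a b = 0.
Proof.
move=> k0 PY HY a b ab.
pose j0 : 'I_k := Ordinal k0.
have diagE : forall c : 'I_n, (c, c) \in E.
  move=> c; apply: contraT => /(HY j0) h.
  by have := posdef_diag c (PY j0); rewrite h ltxx.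
rewrite /thompson_mean; case: xgetP => [X _ [PX HX]|_].
  have := congr1 (fun M : 'M[R]_n => M a b) HX; rewrite /= !mxE summxE.
  have -> : \sum_(j < k) (mcoef (Y j) X *: Y j) a b = 0.
    by apply: big1 => j _; rewrite mxE HY // mulr0.
  rewrite add0r => h0.
  have /eqP: (\sum_(j < k) ocoef (Y j) X) * X a b = 0 by exact: h0.
  rewrite mulf_eq0 => /orP[/eqP O0|/eqP //].
  exfalso.
  have := congr1 (fun M : 'M[R]_n => M a a) HX; rewrite /= !mxE summxE O0 mul0r addr0.
  have -> : \sum_(j < k) (mcoef (Y j) X *: Y j) a a = \sum_(j < k) mcoef (Y j) X * Y j a a.
    by apply: eq_bigr => j _; rewrite mxE.
  move=> /eqP; rewrite psumr_eq0; last first.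
    move=> j _; apply: mulr_ge0; last exact/ltW/posdef_diag.
    by case: (coef_cases (PY j) PX) => [/ltW|[-> _]].
  move=> /allP Hall.
  have mz : forall j, mcoef (Y j) X = 0.
    move=> j; have := Hall j (mem_index_enum j).
    rewrite implyTb mulf_eq0 => /orP[/eqP //|]; by rewrite gt_eqF // posdef_diag.
  have oz : forall j, ocoef (Y j) X = -1.
    move=> j; case: (coef_cases (PY j) PX) => [|[]//]; by rewrite mz ltxx.
  move: O0; under eq_bigr do rewrite oz.
  rewrite sumr_const card_ord => /eqP; rewrite mulNrn oppr_eq0 pnatr_eq0 => /eqP k00.
  by clear j0; move: k0; rewrite k00.
rewrite mxE; case: eqP => [ab'|//]; by move: ab; rewrite ab' diagE.
Qed.
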